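(* Let $n\in\{5,6,7\}$. The spanning subgraph $H$ of $P_n$ whose edges are those given by the prefix-reversals $r_4$ and $r_5$ is a disjoint union of $10$-cycles. Each such cycle consists of permutations of the same parity. Consequently, $P_n$ has an equitable proper $4$-coloring in which every color class has exactly $n!/4$ vertices. This coloring is obtained by properly $2$-coloring the cycles of $H$ consisting of even permutations with two colors, and the cycles consisting of odd permutations with two other colors.
   Context: For $n\geqslant 1$, the Pancake graph $P_n$ is the Cayley graph on the symmetric group $\mathrm{Sym}_n$, with permutations written in one-line notation $\pi=[\pi_1\pi_2\ldots\pi_n]$. Its generating set consists of the prefix-reversals $r_i$, $2\leqslant i\leqslant n$. Multiplying $\pi$ on the right by $r_i$ reverses the first $i$ entries: $\pi r_i=[\pi_i\pi_{i-1}\ldots\pi_1\pi_{i+1}\ldots\pi_n]$. Two vertices $\pi,\sigma$ are adjacent iff $\sigma=\pi r_i$ for some $2\leqslant i\leqslant n$. A proper coloring is equitable if the sizes of any two color classes differ by at most one. *)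

(* Defs.v *)
From mathcomp Require Import all_boot all_order all_fingroup.
Set Implicit Arguments. Unset Strict Implicit. Unset Printing Implicit Defensive.

(* Positions are 0-based: a permutation pi : 'S_n in one-line notation is
   [pi 0, pi 1, ..., pi (n-1)].  The prefix reversal r_i sends position j
   to position i-1-j for j < i and fixes the others. *)
Definition revn (i j : nat) : nat := if j < i then i.-1 - j else j.

Definition rev_pos (n i : nat) (j : 'I_n) : 'I_n := insubd j (revn i j).

(* sigma = pi r_i  (pi r_i)(j) = pi (r_i j), i.e. reversing the first i entries *)
Definition is_flip (n i : nat) (pi sigma : 'S_n) : bool :=
  [forall j : 'I_n, sigma j == pi (@rev_pos n i j)].

Definition pancake_adj (n : nat) : rel 'S_n :=
  fun pi sigma => [exists i : 'I_n.+1, (2 <= i) && is_flip i pi sigma].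

Definition H45_adj (n : nat) : rel 'S_n :=
  fun pi sigma => is_flip 4 pi sigma || is_flip 5 pi sigma.

Definition proper_coloring (T : finType) (e : rel T) (k : nat) (c : T -> 'I_k) : Prop :=
  forall x y, e x y -> c x != c y.

Definition equitable (T : finType) (k : nat) (c : T -> 'I_k) : Prop :=
  forall a b : 'I_k, #|[set x | c x == a]| <= #|[set x | c x == b]| + 1.

Arguments pancake_adj n : clear implicits.
Arguments H45_adj n : clear implicits.

(* Main.v *)
Require Import Defs.
From mathcomp Require Import all_boot all_order all_fingroup.
From mathcomp Require Import zify.
Set Implicit Arguments. Unset Strict Implicit. Unset Printing Implicit Defensive.

Lemma val_rev_pos n i (j : 'I_n) :
  val (rev_pos i j) = if revn i j < n then revn i j else val j.
Proof. by rewrite /rev_pos val_insubd. Qed.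

Lemma val_rev_pos_le n i (j : 'I_n) : i <= n -> val (rev_pos i j) = revn i j.
Proof.
move=> hi; rewrite val_rev_pos /revn; have := ltn_ord j.
case: ifP => h1 hj; case: ifP => h2 //.
all: have := negbT h1; rewrite h2; lia.
Qed.

Lemma rev_pos_invol n i : involutive (@rev_pos n i).
Proof.
move=> j; apply: val_inj; rewrite !val_rev_pos /revn -!subn1.
case: j => /= j hj; case: (ltnP j i) => h1.
  case: (ltnP (i - 1 - j) n) => h2.
    have -> : i - 1 - j < i by lia.
    have -> : i - 1 - (i - 1 - j) = j by lia.
    by rewrite hj.
  by rewrite h1 ifF //; apply/negbTE; rewrite -leqNgt.
by rewrite !if_same (ltnNge j i) h1 /= hj.
Qed.

Definition rho n i : 'S_n := perm (can_inj (@rev_pos_invol n i)).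

Lemma rhoE n i j : rho n i j = rev_pos i j.
Proof. by rewrite permE. Qed.

Lemma rho_invol n i : (rho n i * rho n i = 1)%g.
Proof. by apply/perm.permP => j; rewrite permM !rhoE rev_pos_invol perm1. Qed.

Lemma is_flipE n i (x y : 'S_n) : is_flip i x y = (y == rho n i * x)%g.
Proof.
apply/forallP/eqP => [h|->].
  by apply/perm.permP => j; rewrite permM rhoE; apply/eqP.
by move=> j; rewrite permM rhoE.
Qed.
Definition flipi m := if odd m then 5 else 4.
Fixpoint posw m j := if m is m'.+1 then posw m' (revn (flipi m') j) else j.
Fixpoint Qp n m (j : 'I_n) : 'I_n :=
  if m is m'.+1 then Qp m' (rev_pos (flipi m') j) else j.
Fixpoint xs n (pi : 'S_n) m : 'S_n :=
  if m is m'.+1 then (rho n (flipi m') * xs pi m')%g else pi.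

Definition c4 m := if odd m then m.-1 else m.+1.
Definition c5 m := if odd m then m.+1 %% 10 else (m + 9) %% 10.

Lemma B2 : all (fun m => all (fun j => (posw m (revn 4 j) == posw (c4 m) j)
   && (posw m (revn 5 j) == posw (c5 m) j)) (iota 0 5)) (iota 0 10).
Proof. by []. Qed.

Lemma B1 : all (fun l => all (fun m => (posw l 0 == posw m 0) && (posw l 1 == posw m 1) ==> (l == m)) (iota 0 10)) (iota 0 10).
Proof. by []. Qed.

Lemma B3 : all (fun m => (c4 m < 10) && (c5 m < 10) && (odd (c4 m) == ~~ odd m)
   && (odd (c5 m) == ~~ odd m)) (iota 0 10).
Proof. by []. Qed.

Lemma inI k m : m < k -> m \in iota 0 k.
Proof. by rewrite mem_iota. Qed.

Lemma revn_big i j : i <= j -> revn i j = j.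
Proof. by rewrite /revn ltnNge => ->. Qed.

Lemma posw_big m j : 5 <= j -> posw m j = j.
Proof.
elim: m j => //= m IH j hj; rewrite revn_big ?IH //.
by apply: leq_trans hj; rewrite /flipi; case: odd.
Qed.

Lemma xsE n (pi : 'S_n) m j : xs pi m j = pi (Qp m j).
Proof. by elim: m j => //= m IH j; rewrite permM rhoE IH. Qed.

Lemma val_Qp n m (j : 'I_n) : 5 <= n -> val (Qp m j) = posw m j.
Proof.
move=> hn; elim: m j => //= m IH j; rewrite IH val_rev_pos_le //.
by apply: leq_trans hn; rewrite /flipi; case: odd.
Qed.

Lemma xs_eq n (pi : 'S_n) a b : 5 <= n ->
  (forall j, j < 5 -> posw a j = posw b j) -> xs pi a = xs pi b.
Proof.
move=> hn h; apply/permP => j; rewrite !xsE; congr (pi _); apply: val_inj.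
rewrite !val_Qp //; case: (ltnP j 5) => hj; first exact: h.
by rewrite !posw_big.
Qed.

Lemma flip_xs n (pi : 'S_n) m : 5 <= n -> m < 10 ->
  (rho n 4 * xs pi m = xs pi (c4 m))%g /\ (rho n 5 * xs pi m = xs pi (c5 m))%g.
Proof.
move=> hn hm.
have hB : forall j, j < 5 -> (posw m (revn 4 j) == posw (c4 m) j)
   && (posw m (revn 5 j) == posw (c5 m) j).
  move=> j hj; move/allP: B2 => /(_ m (inI hm))/allP.
  by apply; apply: inI.
split; apply/permP => j; rewrite permM rhoE !xsE; congr (pi _); apply: val_inj;
  rewrite !val_Qp // val_rev_pos_le //; (try by apply: leq_trans hn);
  (case: (ltnP j 5) => hj; [by case/andP: (hB _ hj) => /eqP h4 /eqP h5; rewrite ?h4 ?h5 |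
    by rewrite revn_big ?posw_big //; apply: leq_trans hj]).
Qed.

Lemma xs_inj n (pi : 'S_n) l m : 5 <= n -> l < 10 -> m < 10 -> xs pi l = xs pi m -> l = m.
Proof.
move=> hn hl hm e.
have h0 : posw l 0 = posw m 0.
  have := congr1 (fun s : 'S_n => val (s (Ordinal (leq_trans (isT : 0 < 5) hn)))) e.
  by rewrite /= !xsE => /val_inj /perm_inj /(congr1 val); rewrite !val_Qp.
have h1 : posw l 1 = posw m 1.
  have := congr1 (fun s : 'S_n => val (s (Ordinal (leq_trans (isT : 1 < 5) hn)))) e.
  by rewrite /= !xsE => /val_inj /perm_inj /(congr1 val); rewrite !val_Qp.
move/allP: B1 => /(_ l (inI hl))/allP/(_ m (inI hm)).
by rewrite h0 h1 !eqxx /= => /eqP.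
Qed.
Lemma nat_rev_pos_le n i (j : 'I_n) : i <= n -> nat_of_ord (rev_pos i j) = revn i j.
Proof. exact: val_rev_pos_le. Qed.

Lemma val_tperm n (x y z : 'I_n) :
  nat_of_ord (tperm x y z) = if nat_of_ord z == x then nat_of_ord y else if nat_of_ord z == y then nat_of_ord x else z.
Proof.
case: tpermP => [->|->|hx hy]; rewrite ?eqxx //.
  by case: eqP => // /val_inj ->.
by case: eqP => [/val_inj //|_]; case: eqP => // /val_inj.
Qed.

Lemma odd_rho2 n : 2 <= n.+1 -> odd_perm (rho n.+1 2) = true.
Proof.
move=> h; have hk : forall k, k < 2 -> k < n.+1 by move=> k hk'; lia.
have -> : rho n.+1 2 = tperm (inord 0) (inord 1) by (apply/permP => j; apply: ord_inj;
  rewrite ?permM rhoE nat_rev_pos_le // !val_tperm !inordK ?hk //;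
  case: j => j hj /=; rewrite /revn;
  do 8?[case: j hj => [|j] hj; first done]; done).
by rewrite odd_tperm; apply/eqP => /(congr1 (@nat_of_ord _)); rewrite !inordK.
Qed.

Lemma odd_rho3 n : 3 <= n.+1 -> odd_perm (rho n.+1 3) = true.
Proof.
move=> h; have hk : forall k, k < 3 -> k < n.+1 by move=> k hk'; lia.
have -> : rho n.+1 3 = tperm (inord 0) (inord 2) by (apply/permP => j; apply: ord_inj;
  rewrite ?permM rhoE nat_rev_pos_le // !val_tperm !inordK ?hk //;
  case: j => j hj /=; rewrite /revn;
  do 8?[case: j hj => [|j] hj; first done]; done).
by rewrite odd_tperm; apply/eqP => /(congr1 (@nat_of_ord _)); rewrite !inordK.
Qed.

Lemma odd_rho4 n : 4 <= n.+1 -> odd_perm (rho n.+1 4) = false.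
Proof.
move=> h; have hk : forall k, k < 4 -> k < n.+1 by move=> k hk'; lia.
have -> : rho n.+1 4 = (tperm (inord 0) (inord 3) * tperm (inord 1) (inord 2))%g by (apply/permP => j; apply: ord_inj;
  rewrite ?permM rhoE nat_rev_pos_le // !val_tperm !inordK ?hk //;
  case: j => j hj /=; rewrite /revn;
  do 8?[case: j hj => [|j] hj; first done]; done).
rewrite odd_permM !odd_tperm.
have ne : forall a b : nat, a < n.+1 -> b < n.+1 -> a != b -> (inord a != inord b :> 'I_n.+1)
  by move=> a b ha hb hab; apply/eqP => /(congr1 (@nat_of_ord _)); rewrite !inordK //; apply/eqP.
by rewrite (ne 0 3) ?(ne 1 2) ?hk.
Qed.

Lemma odd_rho5 n : 5 <= n.+1 -> odd_perm (rho n.+1 5) = false.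
Proof.
move=> h; have hk : forall k, k < 5 -> k < n.+1 by move=> k hk'; lia.
have -> : rho n.+1 5 = (tperm (inord 0) (inord 4) * tperm (inord 1) (inord 3))%g by (apply/permP => j; apply: ord_inj;
  rewrite ?permM rhoE nat_rev_pos_le // !val_tperm !inordK ?hk //;
  case: j => j hj /=; rewrite /revn;
  do 8?[case: j hj => [|j] hj; first done]; done).
rewrite !odd_permM !odd_tperm.
have ne : forall a b : nat, a < n.+1 -> b < n.+1 -> a != b -> (inord a != inord b :> 'I_n.+1)
  by move=> a b ha hb hab; apply/eqP => /(congr1 (@nat_of_ord _)); rewrite !inordK //; apply/eqP.
by rewrite ?(ne 0 4) ?(ne 1 3) ?hk.
Qed.

Lemma odd_rho6 n : 6 <= n.+1 -> odd_perm (rho n.+1 6) = true.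
Proof.
move=> h; have hk : forall k, k < 6 -> k < n.+1 by move=> k hk'; lia.
have -> : rho n.+1 6 = (tperm (inord 0) (inord 5) * tperm (inord 1) (inord 4) * tperm (inord 2) (inord 3))%g by (apply/permP => j; apply: ord_inj;
  rewrite ?permM rhoE nat_rev_pos_le // !val_tperm !inordK ?hk //;
  case: j => j hj /=; rewrite /revn;
  do 8?[case: j hj => [|j] hj; first done]; done).
rewrite !odd_permM !odd_tperm.
have ne : forall a b : nat, a < n.+1 -> b < n.+1 -> a != b -> (inord a != inord b :> 'I_n.+1)
  by move=> a b ha hb hab; apply/eqP => /(congr1 (@nat_of_ord _)); rewrite !inordK //; apply/eqP.
by rewrite ?(ne 0 5) ?(ne 1 4) ?(ne 2 3) ?hk.
Qed.

Lemma odd_rho7 n : 7 <= n.+1 -> odd_perm (rho n.+1 7) = true.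
Proof.
move=> h; have hk : forall k, k < 7 -> k < n.+1 by move=> k hk'; lia.
have -> : rho n.+1 7 = (tperm (inord 0) (inord 6) * tperm (inord 1) (inord 5) * tperm (inord 2) (inord 4))%g by (apply/permP => j; apply: ord_inj;
  rewrite ?permM rhoE nat_rev_pos_le // !val_tperm !inordK ?hk //;
  case: j => j hj /=; rewrite /revn;
  do 8?[case: j hj => [|j] hj; first done]; done).
rewrite !odd_permM !odd_tperm.
have ne : forall a b : nat, a < n.+1 -> b < n.+1 -> a != b -> (inord a != inord b :> 'I_n.+1)
  by move=> a b ha hb hab; apply/eqP => /(congr1 (@nat_of_ord _)); rewrite !inordK //; apply/eqP.
by rewrite ?(ne 0 6) ?(ne 1 5) ?(ne 2 4) ?hk.
Qed.
Arguments xs n pi m : simpl never.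

Lemma H_E n (x y : 'S_n) : H45_adj n x y = (y == rho n 4 * x)%g || (y == rho n 5 * x)%g.
Proof. by rewrite /H45_adj !is_flipE. Qed.

Lemma rho_back n i (x y : 'S_n) : y = (rho n i * x)%g -> x = (rho n i * y)%g.
Proof. by move=> ->; rewrite mulgA rho_invol mul1g. Qed.

Lemma H_sym n : symmetric (H45_adj n).
Proof.
move=> x y; rewrite !H_E.
by apply/idP/idP => /orP[] /eqP /rho_back ->; rewrite eqxx ?orbT.
Qed.

Lemma H_csym n : connect_sym (H45_adj n).
Proof. exact: sym_connect_sym (@H_sym n). Qed.

Lemma H_odd n (x y : 'S_n.+1) : 5 <= n.+1 -> H45_adj n.+1 x y -> odd_perm y = odd_perm x.
Proof.
move=> hn; rewrite H_E => /orP[] /eqP ->; rewrite odd_permM ?odd_rho4 ?odd_rho5 //.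
by apply: leq_trans hn.
Qed.

Definition cyc n (pi : 'S_n) := mkseq (xs pi) 10.

Lemma cyc_uniq n (pi : 'S_n) : 5 <= n -> uniq (cyc pi).
Proof.
move=> hn; rewrite /cyc /mkseq map_inj_in_uniq ?iota_uniq //.
by move=> l m; rewrite !mem_iota /= => hl hm; apply: xs_inj.
Qed.

Lemma mem_cyc n (pi x : 'S_n) : reflect (exists2 m, m < 10 & x = xs pi m) (x \in cyc pi).
Proof.
apply: (iffP mapP) => [[m] | [m hm ->]].
  by rewrite mem_iota => hm ->; exists m.
by exists m; rewrite ?mem_iota.
Qed.

Lemma index_xs n (pi : 'S_n) m : 5 <= n -> m < 10 -> index (xs pi m) (cyc pi) = m.
Proof.
move=> hn hm; rewrite -{1}(nth_mkseq pi (xs pi) hm).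
by rewrite index_uniq ?size_mkseq ?cyc_uniq.
Qed.

Lemma B3m m : m < 10 -> [/\ c4 m < 10, c5 m < 10, odd (c4 m) = ~~ odd m & odd (c5 m) = ~~ odd m].
Proof.
move=> hm; move/allP: B3 => /(_ m (inI hm)).
by case/andP => /andP[/andP[-> ->] /eqP ->] /eqP ->.
Qed.

Lemma H_xs n (pi y : 'S_n) m : 5 <= n -> m < 10 -> H45_adj n (xs pi m) y ->
  exists2 m', m' < 10 & y = xs pi m' /\ odd m' = ~~ odd m.
Proof.
move=> hn hm; case: (flip_xs pi hn hm) => e4 e5; case: (B3m hm) => h4 h5 o4 o5.
rewrite H_E => /orP[] /eqP ->; [exists (c4 m) | exists (c5 m)] => //.
Qed.

Lemma cyc_closed n (pi x y : 'S_n) : 5 <= n -> x \in cyc pi -> H45_adj n x y -> y \in cyc pi.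
Proof.
move=> hn /mem_cyc [m hm ->] /(H_xs hn hm) [m' hm' [-> _]].
by apply/mem_cyc; exists m'.
Qed.

Lemma edge_xs n (pi : 'S_n) m : H45_adj n (xs pi m) (xs pi m.+1).
Proof.
change (xs pi m.+1) with (rho n (flipi m) * xs pi m)%g.
by rewrite H_E /flipi; case: odd; rewrite eqxx ?orbT.
Qed.

Lemma cyc_path n (pi : 'S_n) : 5 <= n -> path.cycle (H45_adj n) (cyc pi).
Proof.
move=> hn; rewrite /cyc /mkseq /= !edge_xs /=.
case: (flip_xs pi hn (isT : 9 < 10)) => _ e5.
by rewrite H_E -e5 eqxx orbT.
Qed.

Lemma connect_xs n (pi : 'S_n) m : connect (H45_adj n) pi (xs pi m).
Proof.
elim: m => [|m IH]; first exact: connect0.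
exact: connect_trans IH (connect1 (edge_xs _ _)).
Qed.

Lemma cyc_connect n (pi s : 'S_n) : 5 <= n -> (s \in cyc pi) = connect (H45_adj n) pi s.
Proof.
move=> hn; apply/idP/idP => [/mem_cyc [m _ ->]|h]; first exact: connect_xs.
have cl : closed (H45_adj n) (cyc pi).
  by apply: intro_closed; [exact: H_csym | move=> x y hxy hx; apply: cyc_closed hx hxy].
rewrite -(closed_connect cl h).
by apply/mem_cyc; exists 0.
Qed.

Lemma card_nb n (pi : 'S_n) : 5 <= n -> #|[set sigma | H45_adj n pi sigma]| = 2.
Proof.
move=> hn.
have -> : [set sigma | H45_adj n pi sigma] = [set (rho n 4 * pi)%g; (rho n 5 * pi)%g].
  by apply/setP => s; rewrite !inE H_E.
rewrite cards2; case: (flip_xs pi hn (isT : 0 < 10)) => /= -> ->.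
by case: eqP => // /xs_inj; move/(_ hn isT isT).
Qed.
Definition bcol n (x : 'S_n) : bool := odd (index x (cyc (root (H45_adj n) x))).

Lemma b_flip n (x y : 'S_n) : 5 <= n -> H45_adj n x y -> bcol y = ~~ bcol x.
Proof.
move=> hn hxy; rewrite /bcol.
have -> : root (H45_adj n) y = root (H45_adj n) x.
  by apply/esym/(rootP (@H_csym n)); apply: connect1.
set r := root _ x.
have : x \in cyc r by rewrite cyc_connect // H_csym connect_root.
case/mem_cyc => m hm ex; rewrite ex in hxy *.
case: (H_xs hn hm hxy) => m' hm' [-> om].
by rewrite !index_xs.
Qed.

Definition col n (x : 'S_n) : 'I_4 := inord (2 * odd_perm x + bcol x).

Lemma val_col n (x : 'S_n) : nat_of_ord (col x) = 2 * odd_perm x + bcol x.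
Proof. by rewrite inordK //; case: odd_perm; case: bcol. Qed.

Lemma card_le_map (T : finType) (f : T -> T) (A B : {set T}) :
  injective f -> (forall x, x \in A -> f x \in B) -> #|A| <= #|B|.
Proof.
move=> inj h; rewrite -(card_imset A inj); apply: subset_leq_card.
by apply/subsetP => y /imsetP [x hx ->]; apply: h.
Qed.

Definition Sp n o := [set x : 'S_n | odd_perm x == o].
Definition Ap n o bb := [set x : 'S_n | (odd_perm x == o) && (bcol x == bb)].

Lemma card_Sp n : 2 <= n.+1 -> #|Sp n.+1 false| = #|Sp n.+1 true|.
Proof.
move=> hn; have hf : forall o x, x \in Sp n.+1 o -> (rho n.+1 2 * x)%g \in Sp n.+1 (~~ o).
  by move=> o x; rewrite !inE odd_permM odd_rho2 // => /eqP ->.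
by apply/eqP; rewrite eqn_leq !(card_le_map (mulgI (rho n.+1 2)) (hf _)).
Qed.

Lemma card_Ap n o : 5 <= n.+1 -> #|Ap n.+1 o false| = #|Ap n.+1 o true|.
Proof.
move=> hn.
have hH : forall x, H45_adj n.+1 x (rho n.+1 4 * x)%g by move=> x; rewrite H_E eqxx.
have hf : forall bb x, x \in Ap n.+1 o bb -> (rho n.+1 4 * x)%g \in Ap n.+1 o (~~ bb).
  move=> bb x; rewrite !inE (b_flip hn (hH x)).
  rewrite odd_permM odd_rho4 ?(leq_trans _ hn) //=.
  by case/andP => -> /eqP ->; rewrite eqxx.
by apply/eqP; rewrite eqn_leq !(card_le_map (mulgI (rho n.+1 4)) (hf _)).
Qed.

Lemma card_Sp_split n o : #|Sp n o| = #|Ap n o true| + #|Ap n o false|.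
Proof.
rewrite -(cardsID [set x | bcol x] (Sp n o)); congr (_ + _); apply: eq_card => x;
  by rewrite !inE; case: bcol; rewrite ?andbT ?andbF.
Qed.

Lemma card_total n : #|Sp n false| + #|Sp n true| = n`!.
Proof.
rewrite -card_Sn -(cardsC (Sp n true)) addnC; congr (_ + _).
by apply: eq_card => x; rewrite !inE; case: odd_perm.
Qed.

Lemma card_Ap_val n o : 5 <= n.+1 -> #|Ap n.+1 o false| = n.+1`! %/ 4.
Proof.
move=> hn; have s1 := card_Sp (leq_trans (isT : 2 <= 5) hn).
have e0 := card_Sp_split n.+1 false; have e1 := card_Sp_split n.+1 true.
have a0 := card_Ap false hn; have a1 := card_Ap true hn; have t := card_total n.+1.
have -> : n.+1`! = 4 * #|Ap n.+1 o false| by case: o; lia.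
by rewrite mulKn.
Qed.
Lemma col_neq n (x y : 'S_n) :
  (odd_perm y != odd_perm x) || (bcol y != bcol x) -> col x != col y.
Proof.
move=> h; apply/eqP => /(congr1 (@nat_of_ord _)) e.
have := etrans (esym (val_col x)) (etrans e (val_col y)).
by move: h; case: (odd_perm x); case: (odd_perm y); case: (bcol x); case: (bcol y).
Qed.

Lemma col_val_eq n (x : 'S_n) (P : nat -> Prop) : P (2 * odd_perm x + bcol x) -> P (col x).
Proof. by move=> h; exact: (eq_ind_r P h (val_col x)). Qed.

Lemma col_class n (a : 'I_4) x : (col x == a) = (x \in Ap n (2 <= a) (odd a)).
Proof.
rewrite inE; change ((nat_of_ord (col x) == nat_of_ord a) = ((odd_perm x == (2 <= a)) && (bcol x == odd a))).
apply: (@col_val_eq n x (fun v => (v == a) = _)).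
case: a => [[|[|[|[|a]]]] ha] //=;
  by case: (odd_perm x); case: (bcol x).
Qed.

Lemma main_gen n : 5 <= n.+1 -> n.+1 <= 7 ->
  (forall pi : 'S_n.+1, #|[set sigma | H45_adj n.+1 pi sigma]| = 2) /\
  (forall pi : 'S_n.+1, exists cyc : seq 'S_n.+1,
      [/\ size cyc = 10, uniq cyc, pi \in cyc, path.cycle (H45_adj n.+1) cyc
        & forall sigma, (sigma \in cyc) = connect (H45_adj n.+1) pi sigma]) /\
  (forall pi sigma : 'S_n.+1, connect (H45_adj n.+1) pi sigma ->
      odd_perm pi = odd_perm sigma) /\
  (exists c : 'S_n.+1 -> 'I_4,
      [/\ proper_coloring (pancake_adj n.+1) c,
          equitable c,
          (forall a : 'I_4, #|[set x | c x == a]| = n.+1`! %/ 4),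
          proper_coloring (H45_adj n.+1) c
        & forall x : 'S_n.+1, (2 <= c x) = odd_perm x]).
Proof.
move=> h5 h7.
have csize : forall a : 'I_4, #|[set x : 'S_n.+1 | col x == a]| = n.+1`! %/ 4.
  move=> a; have -> : #|[set x : 'S_n.+1 | col x == a]| = #|Ap n.+1 (2 <= a) (odd a)|.
    by apply: eq_card => x; rewrite inE col_class.
  by case: (odd a); rewrite -?card_Ap // card_Ap_val.
split; first by move=> pi; apply: card_nb.
split.
  move=> pi; exists (cyc pi); split.
  - by rewrite size_mkseq.
  - exact: cyc_uniq.
  - by apply/mem_cyc; exists 0.
  - exact: cyc_path.
  - by move=> s; apply: cyc_connect.
split.
  move=> pi sigma hc.
  have cl : closed (H45_adj n.+1) [pred s | odd_perm s == odd_perm pi].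
    apply: intro_closed; first exact: H_csym.
    by move=> x y hxy; rewrite !inE (H_odd h5 hxy).
  by have := closed_connect cl hc; rewrite !inE eqxx => /esym /eqP.
exists (@col n.+1); split.
- move=> x y /existsP [[i hi] /= /andP [h2]]; rewrite is_flipE => /eqP ey.
  apply: col_neq.
  have hH : i = 4 \/ i = 5 -> H45_adj n.+1 x y.
    by case=> ei; rewrite H_E ey ei eqxx ?orbT.
  have hO : odd_perm (rho n.+1 i) -> odd_perm y != odd_perm x.
    by rewrite ey odd_permM => ->; case: odd_perm.
  have hi7 : i <= 7 by apply: leq_trans h7; rewrite -ltnS.
  case: i hi h2 ey hH hO hi7 => [|[|[|[|[|[|[|[|i]]]]]]]] hi h2 ey hH hO hi7 //.
  + by rewrite hO // odd_rho2.
  + by rewrite hO // odd_rho3.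
  + by rewrite (b_flip h5 (hH (or_introl erefl))); case: bcol; rewrite orbT.
  + by rewrite (b_flip h5 (hH (or_intror erefl))); case: bcol; rewrite orbT.
  + by rewrite hO // odd_rho6.
  + by rewrite hO // odd_rho7.
- by move=> a b; rewrite !csize leq_addr.
- exact: csize.
- by move=> x y hxy; apply: col_neq; rewrite (b_flip h5 hxy); case: bcol; rewrite orbT.
- move=> x; apply: (@col_val_eq _ x (fun v => (2 <= v) = odd_perm x)).
  by case: odd_perm; case: bcol.
Qed.

Theorem mainTheorem6 (n : nat) (hn : n \in [:: 5; 6; 7]) :
  (forall pi : 'S_n, #|[set sigma | H45_adj n pi sigma]| = 2) /\
  (forall pi : 'S_n, exists cyc : seq 'S_n,
      [/\ size cyc = 10, uniq cyc, pi \in cyc, path.cycle (H45_adj n) cyc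
        & forall sigma, (sigma \in cyc) = connect (H45_adj n) pi sigma]) /\
  (forall pi sigma : 'S_n, connect (H45_adj n) pi sigma ->
      odd_perm pi = odd_perm sigma) /\
  (exists c : 'S_n -> 'I_4,
      [/\ proper_coloring (pancake_adj n) c,
          equitable c,
          (forall a : 'I_4, #|[set x | c x == a]| = n`! %/ 4),
          proper_coloring (H45_adj n) c
        & forall x : 'S_n, (2 <= c x) = odd_perm x]).
Proof.
case: n hn => [|n] hn; first by [].
apply: main_gen; move: hn; rewrite !inE => /or3P [] /eqP -> //.
Qed.
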